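(* Let $q$ be a positive integer and let $\mathcal{T}_q=(\tau_1,\ldots,\tau_q)$ be the permutation ideal. Identify each vertex $\ell_{i,j}$ ($1\le i\le j\le q$) of $\mathbb{M}_q^2$ with the monomial $\tau_i\tau_j$. Then the Scarf complex of $\mathcal{T}_q^{\,2}$ coincides with $\mathbb{M}_q^2$, i.e. $\operatorname{Scarf}(\mathcal{T}_q^{\,2})=\mathbb{M}_q^2$.
   Context: Permutation ideal: let $S_q$ be the symmetric group on $[q]=\{1,\ldots,q\}$; for $\sigma\in S_q$ written in one-line notation $\sigma=i_1i_2\cdots i_q$, $\sigma(j)=i_j$. Let $K$ be a field and $S_{\mathcal{T}}=K[x_\sigma:\sigma\in S_q]$ (one variable per permutation). For $i\in[q]$ put $\tau_i=\prod_{\sigma\in S_q}x_\sigma^{\sigma(i)}$, and $\mathcal{T}_q=(\tau_1,\ldots,\tau_q)$. The monomials $\tau_i\tau_j$, $1\le i\le j\le q$, are pairwise distinct and form the minimal generating set of $\mathcal{T}_q^{\,2}$. $\mathbb{M}_q^2$: vertex set $\{\ell_{i,j}:1\le i\le j\le q\}$, $\mathcal{M}=\{\ell_{i,j}:i<j\}$, facets $\mathcal{M}_i=\mathcal{M}\cup\{\ell_{i,i}\}$, $i\in[q]$; $\mathbb{M}_q^2=\langle\mathcal{M}_1,\ldots,\mathcal{M}_q\rangle$ is the simplicial complex with these facets. Scarf complex: for a monomial ideal $J$ minimally generated by monomials $g_1,\ldots,g_r$, the Taylor complex $\operatorname{Taylor}(J)$ is the full simplex on vertices $g_1,\ldots,g_r$,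 each face $\gamma$ labeled by $m_\gamma=\operatorname{lcm}$ of its vertices. $\operatorname{Scarf}(J)=\{\gamma\in\operatorname{Taylor}(J): m_\gamma\ne m_{\gamma'}\text{ for all }\gamma'\in\operatorname{Taylor}(J),\ \gamma'\neq\gamma\}$. *)

(* Defs.v *)
From mathcomp Require Import all_boot all_fingroup.
Set Implicit Arguments. Unset Strict Implicit. Unset Printing Implicit Defensive.

(* Monomials in the variables x_sigma (sigma : {perm 'I_q}) are represented by
   their exponent vectors; product = pointwise sum, lcm = pointwise max,
   the monomial 1 = the zero vector.  Permutations of [q] are permutations of
   'I_q = {0,..,q-1}; the 1-based value sigma(i) is (sigma i).+1. *)
Definition monom (q : nat) := {ffun {perm 'I_q} -> nat}.

Definition tau (q : nat) (i : 'I_q) : monom q := [ffun s : {perm 'I_q} => (s i).+1].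

Definition mmul (q : nat) (m n : monom q) : monom q := [ffun s => m s + n s].

Definition vert (q : nat) := {p : 'I_q * 'I_q | p.1 <= p.2}.

Definition gen (q : nat) (v : vert q) : monom q :=
  mmul (tau (sval v).1) (tau (sval v).2).

(* Generic Taylor / Scarf complexes for a monomial ideal minimally generated
   by the family g indexed by the finite type I; faces are subsets of I. *)
Definition lcm_label (q : nat) (I : finType) (g : I -> monom q) (A : {set I}) : monom q :=
  [ffun s => \max_(v in A) g v s].

Definition Taylor (q : nat) (I : finType) (g : I -> monom q) : {set {set I}} :=
  [set: {set I}].

Definition Scarf (q : nat) (I : finType) (g : I -> monom q) : {set {set I}} :=
  [set A in Taylor g | [forall B in Taylor g, (B != A) ==> (lcm_label g B != lcm_label g A)]].

Definition Mset (q : nat) : {set vert q} := [set v : vert q | (sval v).1 < (sval v).2].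

Definition facetM (q : nat) (i : 'I_q) : {set vert q} :=
  Mset q :|: [set v : vert q | ((sval v).1 == i) && ((sval v).2 == i)].

Definition Mq2 (q : nat) : {set {set vert q}} :=
  [set A : {set vert q} | [exists i : 'I_q, A \subset facetM i]].

(* Main.v *)
Set Warnings "-notation-overridden".
Require Import Defs.
From mathcomp Require Import all_boot all_fingroup zify.
Set Implicit Arguments. Unset Strict Implicit.

Section S.
Variable q : nat.
Local Notation V := (vert q).
Local Notation g := (@gen q).

Lemma genE (v : V) (s : {perm 'I_q}) : g v s = (s (sval v).1).+1 + (s (sval v).2).+1.
Proof. by rewrite /gen /mmul /tau !ffunE. Qed.

Lemma lcmE (A : {set V}) s : lcm_label g A s = \max_(v in A) g v s.
Proof. by rewrite /lcm_label ffunE. Qed.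

Lemma max_le (A : {set V}) s m : (forall v, v \in A -> g v s <= m) -> \max_(v in A) g v s <= m.
Proof. by move=> H; apply/bigmax_leqP => v /H. Qed.

Lemma le_max (A : {set V}) s v : v \in A -> g v s <= \max_(u in A) g u s.
Proof. by move=> H; apply: leq_bigmax_cond. Qed.

Lemma perm_top (x : 'I_q) : exists s : {perm 'I_q}, forall c : 'I_q, c != x -> s c < s x.
Proof.
have hq : q.-1 < q by have := ltn_ord x; lia.
pose top := Ordinal hq.
exists (tperm x top) => c cx.
rewrite tpermL.
have H1 : tperm x top c != top.
  by rewrite -{2}(tpermL x top) (inj_eq perm_inj).
move: H1 (ltn_ord (tperm x top c)); move: (tperm x top c) => t.
rewrite -val_eqE /top /= => /eqP; lia.
Qed.

Lemma perm_top2 (x y : 'I_q) : x != y -> exists s : {perm 'I_q},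
  s y < s x /\ forall c : 'I_q, c != x -> c != y -> s c < s y.
Proof.
move=> xy.
have hq : q.-1 < q by have := ltn_ord x; lia.
have hq2 : q.-2 < q by have := ltn_ord x; lia.
have q2 : 1 < q.
  have := ltn_ord x; have := ltn_ord y; move: xy; rewrite -val_eqE /= => /eqP; lia.
pose top := Ordinal hq. pose sec := Ordinal hq2.
pose s1 := tperm x top. pose y' := s1 y.
pose s2 := tperm y' sec.
have ts : top != sec by rewrite -val_eqE /top /sec /=; apply/eqP; lia.
have y't : y' != top by rewrite /y' -(tpermL x top) (inj_eq perm_inj) eq_sym.
exists (s1 * s2)%g.
have sx : (s1 * s2)%g x = top.
  by rewrite permM /s1 tpermL /s2 tpermD // eq_sym.
have sy : (s1 * s2)%g y = sec by rewrite permM /s2 -/y' tpermL.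
rewrite sx sy /top /sec /=; split; first lia.
move=> c cx cy.
have h1 : (s1 * s2)%g c != top by rewrite -sx (inj_eq perm_inj).
have h2 : (s1 * s2)%g c != sec by rewrite -sy (inj_eq perm_inj).
move: h1 h2 (ltn_ord ((s1 * s2)%g c)); move: ((s1 * s2)%g c) => t.
rewrite -!val_eqE /top /sec /= => /eqP h1 /eqP h2 h3; lia.
Qed.

Definition diag (v : V) := (sval v).1 == (sval v).2.
Definition udiag (A : {set V}) := forall u v, u \in A -> v \in A -> diag u -> diag v -> u = v.

Lemma neq_vert (u w : V) : u != w ->
  ~ ((nat_of_ord (sval u).1 = nat_of_ord (sval w).1) /\ (nat_of_ord (sval u).2 = nat_of_ord (sval w).2)).
Proof.
move=> /eqP uw [h1 h2]; apply: uw; move: h1 h2.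
case: u => [[a b] ?]; case: w => [[c d] ?] /= /val_inj E1 /val_inj E2; subst.
exact: val_inj.
Qed.

Lemma sep (A : {set V}) (w : V) : udiag A ->
  exists s : {perm 'I_q}, forall u, u \in A -> u != w -> g u s < g w s.
Proof.
move=> UA.
case: w => [[x0 y0] /= hw].
case: (eqVneq x0 y0) => [exy | nxy].
  subst y0. have [s Hs] := perm_top x0.
  exists s => u uA uw.
  have F : forall z : 'I_q, (nat_of_ord z = nat_of_ord x0 /\ (s z : nat) = s x0) \/ s z < s x0.
    move=> z; case: (eqVneq z x0) => [->|zx]; [by left | right; exact: Hs].
  have := neq_vert uw; rewrite !genE /=.
  move: (F (sval u).1) (F (sval u).2); lia.
pose b := [exists u in A, diag u && (nat_of_ord (sval u).1 == nat_of_ord x0)].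
have [x [y [Hxy [nd xyne]]]] : exists x y : 'I_q,
   ((x = x0 /\ y = y0) \/ (x = y0 /\ y = x0)) /\
   (forall u, u \in A -> diag u -> nat_of_ord (sval u).1 <> nat_of_ord x) /\ x != y.
  case Hb: b.
  - move/existsP: Hb => [u' /andP [u'A /andP [du' /eqP u'x]]].
    exists y0, x0; split; first by right.
    split; last by rewrite eq_sym.
    move=> u uA du ux. have := UA u u' uA u'A du du'. move=> E; subst u'.
    by move: u'x nxy; rewrite ux => /val_inj ->; rewrite eqxx.
  - exists x0, y0; split; first by left.
    split; last by [].
    move=> u uA du ux. move/negbT: Hb => /existsPn /(_ u).
    by rewrite uA du ux eqxx.
have [s [sxy Hs]] := perm_top2 xyne.
exists s => u uA uw.
have F : forall z : 'I_q, (nat_of_ord z = nat_of_ord x /\ (s z : nat) = s x) \/ (nat_of_ord z = nat_of_ord y /\ (s z : nat) = s y) \/ s z < s y.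
  move=> z; case: (eqVneq z x) => [->|zx]; first by left.
  case: (eqVneq z y) => [->|zy]; first by right; left.
  by right; right; exact: Hs.
have := neq_vert uw; rewrite !genE /=.
have hu := svalP u.
have hnd : nat_of_ord (sval u).1 = nat_of_ord (sval u).2 -> nat_of_ord (sval u).1 <> nat_of_ord x.
  move=> e; apply: nd => //; rewrite /diag; apply/eqP/val_inj; exact: e.
have lt : x0 < y0 by rewrite ltn_neqAle nxy hw.
case: Hxy => [[ex ey]|[ex ey]]; subst x y;
move: (F (sval u).1) (F (sval u).2) hnd hu lt sxy; lia.
Qed.

Lemma mq2_udiag A : A \in Mq2 q -> udiag A.
Proof.
rewrite inE => /existsP [i /subsetP sub] u v uA vA du dv.
have := sub u uA; have := sub v vA.
move: du dv; rewrite /diag /facetM !inE.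
case: u {uA} => [[a b] hu]; case: v {vA} => [[c d] hv] /= /eqP ab /eqP cd; subst.
rewrite !ltnn /= => /andP[/eqP e1 _] /andP [/eqP e2 _]; apply: val_inj => /=; by rewrite e1 e2.
Qed.

Lemma udiag_mq2 (hq : 0 < q) A : udiag A -> A \in Mq2 q.
Proof.
move=> UA; rewrite inE; apply/existsP.
case: (pickP [pred u | (u \in A) && diag u]) => [u /andP[uA du] | none].
  exists (sval u).1; apply/subsetP => v vA; rewrite /facetM /Mset !inE.
  case dv: (diag v).
    have E := UA u v uA vA du dv; subst v.
    by move: du; rewrite /diag => /eqP <-; rewrite !eqxx orbT.
  move: dv (svalP v); rewrite /diag ltn_neqAle => /negbT nd le; apply/orP; left; by rewrite le andbT val_eqE.
exists (Ordinal hq); apply/subsetP => v vA; rewrite /facetM /Mset !inE.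
have := none v; rewrite /= vA /= => dv.
move: dv (svalP v); rewrite /diag ltn_neqAle => /negbT nd le; apply/orP; left; by rewrite le andbT val_eqE.
Qed.

Lemma udiag_scarf A : udiag A -> A \in Scarf g.
Proof.
move=> UA; rewrite inE /Taylor inE /=; apply/forallP => B; apply/implyP => _.
apply/implyP => BA; apply/negP => /eqP E.
have Es s : \max_(v in B) g v s = \max_(v in A) g v s by rewrite -!lcmE E.
have gpos w s : 0 < g w s by rewrite genE.
have BsA : B \subset A.
  apply/subsetP => w wB; apply/negPn/negP => wA.
  have [s Hs] := sep w UA.
  have : \max_(v in A) g v s <= (g w s).-1.
    apply: max_le => u uA; have := Hs u uA.
    have -> : u != w by apply/eqP => e; subst; rewrite uA in wA.
    move=> /(_ isT); have := gpos w s; lia.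
  have := le_max s wB; rewrite Es; have := gpos w s; lia.
have AsB : A \subset B.
  apply/subsetP => w wA; apply/negPn/negP => wB.
  have [s Hs] := sep w UA.
  have : \max_(v in B) g v s <= (g w s).-1.
    apply: max_le => u uB; have uA := subsetP BsA u uB; have := Hs u uA.
    have -> : u != w by apply/eqP => e; subst; rewrite uB in wB.
    move=> /(_ isT); have := gpos w s; lia.
  have := le_max s wA; rewrite -Es; have := gpos w s; lia.
by move: BA; rewrite eqEsubset BsA AsB.
Qed.

Lemma not_scarf_lt (A : {set V}) (u v : V) (hij : (sval u).1 < (sval v).1) :
  u \in A -> v \in A -> diag u -> diag v -> A \notin Scarf g.
Proof.
move=> uA vA du dv.
pose w : V := exist _ ((sval u).1, (sval v).1) (ltnW hij).
have uw : u != w.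
  apply/eqP => e; have := congr1 (fun x : V => (sval x).2) e; rewrite /= => h.
  by move: du (hij); rewrite /diag h => /eqP ->; rewrite ltnn.
have vw : v != w.
  apply/eqP => e; have := congr1 (fun x : V => (sval x).1) e; rewrite /= => h.
  by move: (hij); rewrite h ltnn.
have key (C : {set V}) : u \in C -> v \in C -> w \notin C -> lcm_label g (w |: C) = lcm_label g C.
  move=> uC vC wC; apply/ffunP => s; rewrite !ffunE big_setU1 //=; apply/maxn_idPr.
  set M := \max_(i in C) g i s.
  have h1 : g u s <= M := le_max s uC. have h2 : g v s <= M := le_max s vC.
  move: h1 h2; rewrite !genE /=.
  move: du dv; rewrite /diag => /eqP <- /eqP <-.
  case: (leqP (s (sval u).1) (s (sval v).1)); lia.
rewrite inE /Taylor inE /=; apply/negP => /forallP H.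
case wA: (w \in A).
- have := H (A :\ w); rewrite inE /=.
  have -> : (A :\ w != A).
    by apply/eqP => e; move: wA; rewrite -e !inE eqxx.
  rewrite /= -{2}(setD1K wA) key ?eqxx // !inE ?eqxx ?uA ?vA ?uw ?vw //.
- have := H (w |: A); rewrite inE /=.
  have -> : (w |: A != A).
    by apply/eqP => e; move: wA; rewrite -e !inE eqxx.
  by rewrite key ?wA ?eqxx.
Qed.

End S.

Unset Implicit Arguments.
Theorem theorem2 (q : nat) (hq : 0 < q) : Scarf (@gen q) = Mq2 q.
Proof.
apply/setP => A.
case: (boolP (A \in Mq2 q)) => HM.
  by apply: udiag_scarf; exact: mq2_udiag.
apply/negbTE.
have : ~~ [forall u, forall v, ((u \in A) && (v \in A) && diag u && diag v) ==> (u == v)].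
  apply/negP => /forallP Hf; apply: (negP HM); apply: udiag_mq2 => // u v uA vA du dv.
  by apply/eqP; have := forallP (Hf u) v; rewrite uA vA du dv.
case/forallPn => u /forallPn [v]; rewrite negb_imply => /andP [/andP [/andP [/andP [uA vA] du] dv] uv].
case: (ltngtP (sval u).1 (sval v).1) => h.
- exact: (not_scarf_lt h uA vA du dv).
- exact: (not_scarf_lt h vA uA dv du).
- exfalso; move: uv; rewrite -val_eqE /=.
  move: du dv; rewrite /diag.
  case: u {uA} h => [[a b] hu]; case: v {vA} => [[c d] hv] /= /val_inj -> /eqP <- /eqP <-.
  by rewrite eqxx.
Qed.
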